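(* Let $d\ge1$ and $q\in\{2,4\}$, and let $G$ be a function on $[0,\infty)$ with $G\in\mathcal M_{d,0,q}\cap\mathcal N_{\frac q2-1}$. Let $S_1,\ldots,S_{q/2}$ be the subintervals of $[0,\infty)$ from the definition of sign changes for $G$. Then $G(x)\ge0$ for $x\in S_1\cup S_3\cup\cdots$ and $G(x)\le0$ for $x\in S_2\cup S_4\cup\cdots$. Moreover, $\mathrm{sign}(B_{d,q}(G))=(-1)^{q/2+1}$.
   Context: $B_{d,i}(g)=\int_0^\infty x^{d-1+i}g(x)dx$; $b_d=2\pi^{d/2}/\Gamma(d/2)$. $\mathcal M_{d,0,q}$ is the set of $g$ on $[0,\infty)$ with $B_{d,0}(g)=b_d^{-1}$, $B_{d,i}(g)=0$ for $i=2,4,\ldots,q-2$, and $B_{d,q}(g)\ne0$. $\mathcal N_j$ is the set of functions on $[0,\infty)$ that change their sign exactly $j$ times on $[0,\infty)$, where $g$ changes its sign $k$ times on $[a,b]$ if there are $a=x_0<\cdots<x_{k+1}=b$ such that, with $S_j=[x_{j-1},x_j]$, on each $S_j$ either $g\le0$ with $g<0$ somewhere or $g\ge0$ with $g>0$ somewhere, and (if $k\ge1$) $g(x)g(y)\le0$ for all $x\in S_j$, $y\in S_{j+1}$. *)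

(* Defs.v *)
From HB Require Import structures.
From mathcomp Require Import all_boot all_order all_algebra.
From mathcomp Require Import all_classical all_reals all_analysis.
Set Implicit Arguments. Unset Strict Implicit. Unset Printing Implicit Defensive.
Import Order.TTheory GRing.Theory Num.Theory.
Import numFieldNormedType.Exports.
Local Open Scope classical_set_scope.
Local Open Scope ring_scope.

Section Defs.
Variable R : realType.
Local Notation leb := (@lebesgue_measure R).

Definition Gamma (s : R) : R :=
  Rintegral leb `]0%R, +oo[ (fun t => t `^ (s - 1) * expR (- t)).

(* b_d = 2 pi^(d/2) / Gamma(d/2): surface area of the unit sphere in R^d *)
Definition b_ (d : nat) : R :=
  2 * pi `^ (d%:R / 2) / Gamma (d%:R / 2).

Definition Bfun (d i : nat) (g : R -> R) : R -> R :=
  fun x => x ^+ (d.-1 + i) * g x.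

Definition B_ (d i : nat) (g : R -> R) : R :=
  Rintegral leb `[0%R, +oo[ (Bfun d i g).

Definition M_d0q (d q : nat) (g : R -> R) : Prop :=
  [/\ (forall i : nat, (i <= q)%N -> ~~ odd i ->
         leb.-integrable `[0%R, +oo[ (fun x => (Bfun d i g x)%:E)),
      B_ d 0 g = (b_ d)^-1,
      (forall i : nat, (2 <= i <= q - 2)%N -> ~~ odd i -> B_ d i g = 0)
    & B_ d q g != 0].

(* The subintervals S_1, ..., S_{k+1} of [0,oo) determined by the points
   0 = x_0 < x_1 < ... < x_k < x_{k+1} = +oo :
   S_j = [x_{j-1}, x_j] for 1 <= j <= k, and S_{k+1} = [x_k, +oo). *)
Definition Sint (x : nat -> R) (k j : nat) : set R :=
  if (j <= k)%N then [set` `[x j.-1, x j]] else [set` `[x k, +oo[].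

Definition sign_block (g : R -> R) (S : set R) : Prop :=
  ((forall y, S y -> g y <= 0) /\ (exists2 y, S y & g y < 0)) \/
  ((forall y, S y -> 0 <= g y) /\ (exists2 y, S y & 0 < g y)).

Definition sign_partition (g : R -> R) (k : nat) (x : nat -> R) : Prop :=
  [/\ x 0%N = 0,
      (forall i : nat, (i < k)%N -> x i < x i.+1),
      (forall j : nat, (1 <= j <= k.+1)%N -> sign_block g (Sint x k j))
    & (1 <= k)%N -> forall j : nat, (1 <= j <= k)%N ->
         forall y z, Sint x k j y -> Sint x k j.+1 z -> g y * g z <= 0].

Definition changes_sign (g : R -> R) (k : nat) : Prop :=
  exists x, sign_partition g k x.

Definition N_ (j : nat) : set (R -> R) := [set g | changes_sign g j].

End Defs.

(* Main.v *)
Require Import Defs.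
From HB Require Import structures.
From mathcomp Require Import all_boot all_order all_algebra.
From mathcomp Require Import all_classical all_reals all_analysis.
Import Order.TTheory GRing.Theory Num.Theory.
Local Open Scope classical_set_scope.
Local Open Scope ring_scope.
From mathcomp Require Import ring lra.

Section Key.
Variable R : realType.
Local Notation leb := (@lebesgue_measure R).

Lemma key_ae (D : set R) (f g w : R -> R) : measurable D ->
  leb.-integrable D (EFin \o f) -> leb.-integrable D (EFin \o g) ->
  (forall x, D x -> 0 <= f x) -> (forall x, D x -> g x = w x * f x) ->
  Rintegral leb D f = 0 -> Rintegral leb D g = 0.
Proof.
move=> mD intf intg f0 gwf If0.
have [mf _] := integrableP _ _ _ intf.
have [mg _] := integrableP _ _ _ intg.
have I0 : (\int[leb]_(x in D) (EFin \o f) x = 0)%E.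
  rewrite -[LHS]fineK; first by rewrite -/(Rintegral _ _ _) If0.
  exact: integrable_fin_num.
have : (\int[leb]_(x in D) `|(EFin \o f) x| = 0)%E.
  rewrite -I0; apply: eq_integral => x /[!inE] Dx /=.
  by rewrite ger0_norm // f0.
move/(ae_eq_integral_abs leb mD mf) => aef.
have aeg : ae_eq leb D (EFin \o g) (cst 0%E).
  apply: filterS aef => x H Dx /=; rewrite gwf // -/((EFin \o f) x).
  by have := H Dx => /= [[->]]; rewrite mulr0.
rewrite /Rintegral (ae_eq_integral (cst 0%E)) //=.
  by rewrite integral0.
Qed.

Let D0 : set R := `[0%R, +oo[.

Lemma intlin (a b : R) (F1 F2 : R -> R) :
  leb.-integrable D0 (EFin \o F1) -> leb.-integrable D0 (EFin \o F2) ->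
  leb.-integrable D0 (EFin \o (fun x => a * F1 x + b * F2 x)) /\
  Rintegral leb D0 (fun x => a * F1 x + b * F2 x) =
    a * Rintegral leb D0 F1 + b * Rintegral leb D0 F2.
Proof.
move=> i1 i2.
have j1 : leb.-integrable D0 (EFin \o (fun x => a * F1 x)).
  by apply: (eq_integrable _ _ _ _ (integrableZl _ a i1)) => //; exact: measurable_itv.
have j2 : leb.-integrable D0 (EFin \o (fun x => b * F2 x)).
  by apply: (eq_integrable _ _ _ _ (integrableZl _ b i2)) => //; exact: measurable_itv.
split.
  by apply: (eq_integrable _ _ _ _ (integrableD _ j1 j2)) => //; exact: measurable_itv.
by rewrite RintegralD // ?RintegralZl //; exact: measurable_itv.
Qed.


Lemma b_ge0 (d : nat) : 0 <= b_ R d.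
Proof.
rewrite /b_ divr_ge0 // ?mulr_ge0 ?powR_ge0 //.
apply: Rintegral_ge0 => t _; rewrite mulr_ge0 ?powR_ge0 ?expR_ge0 //.
Qed.

Lemma D0P y : D0 y <-> 0 <= y.
Proof. by rewrite /D0 /= in_itv /= andbT. Qed.

Lemma mD0 : measurable D0.
Proof. exact: measurable_itv. Qed.


Lemma BE d i (G : R -> R) : B_ d i G = Rintegral leb D0 (Bfun d i G).
Proof. by []. Qed.

Lemma q2_part (d : nat) (G : R -> R) x : M_d0q d 2 G -> sign_partition G 0 x ->
  forall y, D0 y -> 0 <= G y.
Proof.
case=> hint hB0 _ hB2 [x0 _ hb _].
have := hb 1%N isT; rewrite /sign_block /Sint /= x0.
case=> [[hle _]|[hge _]]; last by move=> y Dy; exact: hge.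
exfalso; move/eqP: hB2; apply.
have i0 := hint 0%N isT isT; have i2 := hint 2%N isT isT.
have [if0 If] := intlin (-1) 0 _ _ i0 i0.
have f0 : forall y, D0 y -> 0 <= -1 * Bfun d 0 G y + 0 * Bfun d 0 G y.
  move=> y Dy; have /D0P y0 := Dy.
  rewrite mul0r addr0 mulN1r oppr_ge0 /Bfun mulr_ge0_le0 ?exprn_ge0 //.
  exact: hle.
have gwf : forall y, D0 y -> Bfun d 2 G y = (fun y => - y ^+ 2) y *
    (-1 * Bfun d 0 G y + 0 * Bfun d 0 G y).
  by move=> y _; rewrite /Bfun addn0 exprD /=; ring.
rewrite BE; apply: (key_ae _ _ _ _ mD0 if0 i2 f0 gwf).
apply/eqP; rewrite eq_le Rintegral_ge0 // andbT If -BE hB0.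
by rewrite mul0r addr0 mulN1r oppr_le0 invr_ge0 b_ge0.
Qed.


Lemma S11 (x : nat -> R) y : x 0%N = 0 -> Sint x 1 1 y <-> 0 <= y <= x 1%N.
Proof. by move=> x0; rewrite /Sint /= in_itv /= x0. Qed.

Lemma S12 (x : nat -> R) y : Sint x 1 2 y <-> x 1%N <= y.
Proof. by rewrite /Sint /= in_itv /= andbT. Qed.

Lemma q4_part (d : nat) (G : R -> R) x : M_d0q d 4 G -> sign_partition G 1 x ->
  (forall y, Sint x 1 1 y -> 0 <= G y) /\ (forall y, Sint x 1 2 y -> G y <= 0).
Proof.
case=> hint hB0 hB2' hB4 [x0 hlt hb hprod].
have a0 : 0 < x 1%N by have := hlt 0%N isT; rewrite x0.
have hB2 : B_ d 2 G = 0 := hB2' 2%N isT isT.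
have hp := hprod isT 1%N isT.
have := hb 1%N isT; rewrite /sign_block.
case=> [[hle [y0 Sy0 neg]]|[hge [y0 Sy0 pos]]]; last first.
  by split => // z Sz; have := hp y0 z Sy0 Sz; nra.
have hge2 : forall z, Sint x 1 2 z -> 0 <= G z.
  by move=> z Sz; have := hp y0 z Sy0 Sz; nra.
exfalso; move/eqP: hB4; apply.
set a := x 1%N in a0 hle hge2 hp.
have i0 := hint 0%N isT isT; have i2 := hint 2%N isT isT.
have i4 := hint 4%N isT isT.
have [if0 If] := intlin 1 (- a ^+ 2) _ _ i2 i0.
have [ig0 Ig] := intlin 1 (- a ^+ 4) _ _ i4 i0.
have f0 : forall y, D0 y -> 0 <= 1 * Bfun d 2 G y + (- a ^+ 2) * Bfun d 0 G y.
  move=> y Dy; have /D0P y0' := Dy.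
  have -> : 1 * Bfun d 2 G y + (- a ^+ 2) * Bfun d 0 G y =
     y ^+ d.-1 * ((y ^+ 2 - a ^+ 2) * G y).
    by rewrite /Bfun addn0 exprD; ring.
  rewrite mulr_ge0 ?exprn_ge0 //.
  have [ya|ya] := leP y a.
    have : G y <= 0 by apply: hle; apply/S11 => //; rewrite y0' ya.
    have : y ^+ 2 - a ^+ 2 <= 0 by nra.
    nra.
  have : 0 <= G y by apply: hge2; apply/S12; exact: ltW.
  have : 0 <= y ^+ 2 - a ^+ 2 by nra.
  nra.
have gwf : forall y, D0 y -> 1 * Bfun d 4 G y + (- a ^+ 4) * Bfun d 0 G y =
    (fun y => y ^+ 2 + a ^+ 2) y *
    (1 * Bfun d 2 G y + (- a ^+ 2) * Bfun d 0 G y).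
  by move=> y _; rewrite /Bfun addn0 !exprD /=; ring.
have If0 : Rintegral leb D0 (fun y => 1 * Bfun d 2 G y + (- a ^+ 2) * Bfun d 0 G y) = 0.
  apply/eqP; rewrite eq_le Rintegral_ge0 // andbT If -!BE hB0 hB2.
  rewrite mul1r add0r mulNr oppr_le0 mulr_ge0 ?invr_ge0 ?b_ge0 //.
  exact: exprn_ge0 (ltW a0).
have B00 : B_ d 0 G = 0.
  move: If0; rewrite If -!BE hB2 mul1r add0r mulNr => /eqP; rewrite oppr_eq0.
  by rewrite mulf_eq0 expf_eq0 /= (gt_eqF a0) /= => /eqP.
have := key_ae _ _ _ _ mD0 if0 ig0 f0 gwf If0.
by rewrite Ig -!BE B00 mulr0 addr0 mul1r => ->.
Qed.

Lemma q4_sg (d : nat) (G : R -> R) x : M_d0q d 4 G -> sign_partition G 1 x ->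
  B_ d 4 G < 0.
Proof.
move=> M P; have [hge hle] := q4_part d G x M P.
case: M => hint hB0 hB2' hB4; case: P => [x0 hlt _ _].
have a0 : 0 < x 1%N by have := hlt 0%N isT; rewrite x0.
have hB2 : B_ d 2 G = 0 := hB2' 2%N isT isT.
set a := x 1%N in a0 hle hge.
have i2 := hint 2%N isT isT; have i4 := hint 4%N isT isT.
have [_ Ih] := intlin (a ^+ 2) (-1) _ _ i2 i4.
have : 0 <= Rintegral leb D0 (fun y => a ^+ 2 * Bfun d 2 G y + (-1) * Bfun d 4 G y).
  apply: Rintegral_ge0 => y /D0P y0.
  have -> : a ^+ 2 * Bfun d 2 G y + (-1) * Bfun d 4 G y =
     y ^+ d.-1 * (y ^+ 2 * ((a ^+ 2 - y ^+ 2) * G y)).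
    by rewrite /Bfun !exprD; ring.
  rewrite mulr_ge0 ?exprn_ge0 // mulr_ge0 ?exprn_ge0 //.
  have [ya|ya] := leP y a.
    have : 0 <= G y by apply: hge; apply/S11 => //; rewrite y0 ya.
    have : 0 <= a ^+ 2 - y ^+ 2 by nra.
    nra.
  have : G y <= 0 by apply: hle; apply/S12; exact: ltW.
  have : a ^+ 2 - y ^+ 2 <= 0 by nra.
  nra.
rewrite Ih -!BE hB2 mulr0 add0r mulN1r oppr_ge0 => H.
by rewrite lt_neqAle hB4 H.
Qed.

End Key.

Theorem lemmaB3 (R : realType) (d q : nat) (G : R -> R) :
  (1 <= d)%N -> (q = 2%N \/ q = 4%N) ->
  M_d0q d q G -> G \in N_ (q./2 - 1) ->
  (forall x : nat -> R, sign_partition G (q./2 - 1) x ->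
     forall j : nat, (1 <= j <= q./2)%N ->
       (odd j -> forall y, Sint x (q./2 - 1) j y -> 0 <= G y) /\
       (~~ odd j -> forall y, Sint x (q./2 - 1) j y -> G y <= 0)) /\
  Num.sg (B_ d q G) = (-1) ^+ (q./2 + 1).
Proof.
move=> _ [->|->] M; rewrite inE => -[x0 P0] /=.
- split.
    move=> x P j /andP[j1 j2].
    have -> : j = 1%N by apply/eqP; rewrite eqn_leq j2 j1.
    split => // _ y Sy; apply: (q2_part _ _ _ _ M P).
    by move: Sy; rewrite /Sint /=; case: P => -> _ _ _.
  have : 0 <= B_ d 2 G.
    by apply: Rintegral_ge0 => y Dy; rewrite /Bfun mulr_ge0 ?exprn_ge0 ?(q2_part _ _ _ _ M P0) //; move/D0P: Dy.
  case: M => _ _ _ hB; rewrite le_eqVlt eq_sym (negbTE hB) /= => H.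
  by rewrite gtr0_sg // expr2 mulN1r opprK.
- split.
    move=> x P j /andP[j1 j2]; have [hge hle] := q4_part _ _ _ _ M P.
    have [->|->] : j = 1%N \/ j = 2%N by case: j j1 j2 => [|[|[|j]]] // _ _; [left|right].
      by split.
    by split.
  by rewrite ltr0_sg ?(q4_sg _ _ _ _ M P0) // !exprS expr0 !mulN1r opprK.
Qed.
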